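(* Let $\langle A,\to\rangle$ be a conditional algebra. The correspondence $B\mapsto E_B$ is a dual lattice isomorphism between the lattice of domains of subalgebras of $\langle A,\to\rangle$ (Boolean subalgebras of $A$ closed under $\to$) and the lattice of C-equivalences of the expanded Stone space $\langle\mathrm{Ul}(A),\tau_s,T_A\rangle$.
   Context: A conditional algebra is $\langle A,\to\rangle$ with $A$ a Boolean algebra and $\to$ binary with $a\to1=1$, $(a\to b)\wedge(a\to c)=a\to(b\wedge c)$, $(a\vee b)\to c\le(a\to c)\wedge(b\to c)$. $\mathrm{Ul}(A)$ is the Stone space of ultrafilters; closed sets are the sets $\varphi(F)=\{u:F\subseteq u\}$ for filters $F$ (the improper filter $A$ included). $D^{\to}_u(F)=\{b:\exists a\in F,\ a\to b\in u\}$; $T_A(u,Z,v)$ iff there is a filter $F$ with $Z=\varphi(F)$ and $D^{\to}_u(F)\subseteq v$. $E_B=\{(u,v): u\cap B=v\cap B\}$. For an equivalence $E$ and closed $Y,C$: $Y\preceq_E C$ iff every $y\in Y$ is $E$-related to some $x\in C$. $E$ is a C-equivalence if it is a Boolean equivalence (for each $(x,y)\notin E$ there is a clopen $E$-closed set containing $x$ but not $y$) and whenever $E(x,y)$ and $T_A(x,Y,x')$ with $Y$ closed, there are $y'$ with $E(x',y')$ and closed $C$ with $T_A(y,C,y')$ and $C\preceq_E Y$. *)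

(* Defs.v *)
(* Boolean algebras are ctbDistrLatticeType (complemented
   distributive lattices with top and bottom). *)
From mathcomp Require Import all_boot all_order.
Set Implicit Arguments. Unset Strict Implicit. Unset Printing Implicit Defensive.
Import Order.Theory.
Local Open Scope order_scope.

Section CondAlg.
Context {d : Order.disp_t} {A : ctbDistrLatticeType d}.

Definition cond_alg (imp : A -> A -> A) : Prop :=
  (forall a, imp a \top = \top) /\
  (forall a b c, imp a b `&` imp a c = imp a (b `&` c)) /\
  (forall a b c, imp (a `|` b) c <= imp a c `&` imp b c).

Definition is_filter (F : A -> Prop) : Prop :=
  F \top /\ (forall a b, F a -> a <= b -> F b) /\
  (forall a b, F a -> F b -> F (a `&` b)).

Definition proper_filter (F : A -> Prop) : Prop := is_filter F /\ ~ F \bot.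

Definition ultrafilter (u : A -> Prop) : Prop :=
  proper_filter u /\
  (forall G, proper_filter G -> (forall a, u a -> G a) -> forall a, G a -> u a).

Definition Ul : Type := {u : A -> Prop | ultrafilter u}.

Definition phi (F : A -> Prop) : Ul -> Prop :=
  fun u => forall a, F a -> proj1_sig u a.

Definition closed_set (Y : Ul -> Prop) : Prop :=
  exists F, is_filter F /\ forall u, Y u <-> phi F u.

Definition clopen (Y : Ul -> Prop) : Prop :=
  closed_set Y /\ closed_set (fun u => ~ Y u).

Definition Dimp (imp : A -> A -> A) (u : Ul) (F : A -> Prop) : A -> Prop :=
  fun b => exists a, F a /\ proj1_sig u (imp a b).

Definition TA (imp : A -> A -> A) (u : Ul) (Z : Ul -> Prop) (v : Ul) : Prop :=
  exists F, is_filter F /\ (forall w, Z w <-> phi F w) /\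
    (forall b, Dimp imp u F b -> proj1_sig v b).

Definition EB (B : A -> Prop) : Ul -> Ul -> Prop :=
  fun u v => forall b, B b -> (proj1_sig u b <-> proj1_sig v b).

Definition equivalence (E : Ul -> Ul -> Prop) : Prop :=
  (forall x, E x x) /\ (forall x y, E x y -> E y x) /\
  (forall x y z, E x y -> E y z -> E x z).

Definition E_closed (E : Ul -> Ul -> Prop) (U : Ul -> Prop) : Prop :=
  forall x y, U x -> E x y -> U y.

Definition boolean_equiv (E : Ul -> Ul -> Prop) : Prop :=
  equivalence E /\
  forall x y, ~ E x y -> exists U, clopen U /\ E_closed E U /\ U x /\ ~ U y.

Definition preceq (E : Ul -> Ul -> Prop) (Y C : Ul -> Prop) : Prop :=
  forall y, Y y -> exists x, C x /\ E y x.

Definition C_equiv (imp : A -> A -> A) (E : Ul -> Ul -> Prop) : Prop :=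
  boolean_equiv E /\
  forall x y x' (Y : Ul -> Prop), E x y -> closed_set Y -> TA imp x Y x' ->
    exists y' (C : Ul -> Prop),
      E x' y' /\ closed_set C /\ TA imp y C y' /\ preceq E C Y.

Definition subalg (imp : A -> A -> A) (B : A -> Prop) : Prop :=
  B \top /\ B \bot /\
  (forall a b, B a -> B b -> B (a `&` b)) /\
  (forall a b, B a -> B b -> B (a `|` b)) /\
  (forall a, B a -> B (~` a)) /\
  (forall a b, B a -> B b -> B (imp a b)).

End CondAlg.

(* Main.v *)
Require Import Defs.
From mathcomp Require Import all_boot all_order.
From mathcomp Require Import boolp classical_sets.
Set Implicit Arguments. Unset Strict Implicit. Unset Printing Implicit Defensive.
Import Order.Theory.
Local Open Scope order_scope.

Section Infra.
Context {d : Order.disp_t} {A : ctbDistrLatticeType d}.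
Local Notation Uin u a := (proj1_sig u a).

Lemma disjC (x y : A) : x `&` y <= \bot -> x <= ~` y.
Proof.
move=> h; have e : x `&` y = \bot by apply/le_anti; rewrite h le0x.
have := @disjoint_lexUl _ _ y x (~` y) e.
by rewrite joinC joinxC lex1 => <-.
Qed.

Definition mclosed (S : A -> Prop) := S \top /\ forall a b, S a -> S b -> S (a `&` b).

Definition gen (S T : A -> Prop) : A -> Prop :=
  fun x => exists s t, S s /\ T t /\ s `&` t <= x.

Lemma gen_filter S T : mclosed S -> mclosed T -> is_filter (gen S T).
Proof.
move=> [S1 SI] [T1 TI]; split; first by exists \top, \top; rewrite lex1.
split.
  by move=> a b [s [t [Ss [Tt h]]]] ab; exists s, t; split=> //; split=> //; apply: le_trans ab.
move=> a b [s1 [t1 [Ss1 [Tt1 h1]]]] [s2 [t2 [Ss2 [Tt2 h2]]]].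
exists (s1 `&` s2), (t1 `&` t2); split; first exact: SI.
split; first exact: TI.
rewrite lexI; apply/andP; split.
  by apply: le_trans h1; apply: leI2; apply: leIl.
by apply: le_trans h2; apply: leI2; apply: leIr.
Qed.

Lemma ultra_ext (F : A -> Prop) : proper_filter F ->
  exists u : @Ul d A, forall a, F a -> Uin u a.
Proof.
move=> [[F1 [Fup FI]] Fb].
pose P (G : set A) := (forall a, ~ G a) \/ (proper_filter G /\ forall a, F a -> G a).
have [M [PM Mmax]] : exists M, P M /\ forall B, (M `<` B)%classic -> ~ P B.
  apply: Zorn_bigcup => C CP Ctot.
  have [[X CX [a Xa]]|none] := pselect (exists2 X, C X & exists a, X a); last first.
    by left=> a [X CX Xa]; apply: none; exists X => //; exists a.
  have filt Y b : C Y -> Y b -> proper_filter Y /\ (forall a, F a -> Y a).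
    by move=> CY Yb; have := CP Y CY; rewrite /P; case=> // h; exfalso; exact: (h b).
  have [[[X1 [Xup XI]] Xb] XF] := filt X a CX Xa.
  rewrite /P /bigcup /=; right; split; last by move=> c Fc; exists X => //; exact: XF.
  split; last first.
    by move=> [Y CY Yb]; have [[_ Yn] _] := filt Y _ CY Yb; exact: Yn.
  split; first by exists X.
  split.
    move=> b c [Y CY Yb] bc; exists Y => //.
    have [[[_ [Yup _]] _] _] := filt Y _ CY Yb; exact: Yup bc.
  move=> b c [Y CY Yb] [Z CZ Zc].
  have [[[_ [_ YI]] _] _] := filt Y _ CY Yb.
  have [[[_ [_ ZI]] _] _] := filt Z _ CZ Zc.
  case: (Ctot Y Z CY CZ) => h.
    by exists Z => //; apply: ZI => //; exact: h.
  by exists Y => //; apply: YI => //; exact: h.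
have PF : P F by right; split=> //; split=> //; split.
have [Mempty|[MF MFs]] := PM.
  exfalso; apply: (Mmax F) => //; split; first by move=> a Ma; exfalso; exact: (Mempty a).
  by move=> h; apply: (Mempty \top); exact: h.
have uf : ultrafilter M.
  split=> // G PG MG a Ga.
  apply: contrapT => nMa; apply: (Mmax G); last by right; split=> // b hb; apply: MG; exact: MFs.
  by split=> // h; apply: nMa; exact: h.
by exists (exist _ M uf).
Qed.

Lemma ext2 (S T : A -> Prop) : mclosed S -> mclosed T ->
  (forall s t, S s -> T t -> ~ (s `&` t <= \bot)) ->
  exists u : @Ul d A, (forall s, S s -> Uin u s) /\ (forall t, T t -> Uin u t).
Proof.
move=> mS mT disj.
have pf : proper_filter (gen S T).
  split; first exact: gen_filter.
  by move=> [s [t [Ss [Tt h]]]]; exact: (disj s t).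
have [u hu] := ultra_ext pf; exists u; split.
  by move=> s Ss; apply: hu; exists s, \top; split=> //; split; [case: mT|rewrite meetx1].
by move=> t Tt; apply: hu; exists \top, t; split; [case: mS|split=> //; rewrite meetC meetx1].
Qed.

Section UF.
Variable u : @Ul d A.
Lemma uf_top : Uin u \top. Proof. by case: u => ? [[[]]]. Qed.
Lemma uf_up {a b} : Uin u a -> a <= b -> Uin u b.
Proof. by case: u => ? [[[_ []]]] /=; eauto. Qed.
Lemma uf_meet {a b} : Uin u a -> Uin u b -> Uin u (a `&` b).
Proof. by case: u => ? [[[_ []]]] /=; eauto. Qed.
Lemma uf_bot : ~ Uin u \bot. Proof. by case: u => ? [[]]. Qed.
Lemma uf_meetE {a b} : Uin u (a `&` b) -> Uin u a /\ Uin u b.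
Proof. by move=> h; split; [apply: (uf_up h) (leIl _ _)|apply: (uf_up h) (leIr _ _)]. Qed.
Lemma uf_notboth {a} : Uin u a -> Uin u (~` a) -> False.
Proof. by move=> h1 h2; apply: uf_bot; rewrite -(meetxC a); exact: uf_meet. Qed.
Lemma uf_compl {a} : ~ Uin u a -> Uin u (~` a).
Proof.
move=> na; case: (u) na => U [[fU nb] mx] /= na.
have fU' := fU; case: fU' => [U1 [Uup UI]].
have mU : mclosed U by split.
have mT : mclosed (fun x => a <= x) by split; [rewrite lex1|move=> ? ? ? ?; rewrite lexI; apply/andP].
have Gf := gen_filter mU mT.
have [Gb|nGb] := pselect (gen U (fun x => a <= x) \bot).
  case: Gb => s [t [Us [ta h]]]; apply: Uup Us _; apply: disjC.
  by apply: le_trans h; apply: leI2.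
exfalso; apply: na; apply: (mx _ (conj Gf nGb)).
  by move=> b Ub; exists b, \top; split=> //; split; [rewrite lex1|rewrite meetx1].
by exists \top, a; split=> //; split=> //; rewrite meetC meetx1.
Qed.
Lemma uf_join {a b} : Uin u (a `|` b) -> Uin u a \/ Uin u b.
Proof.
move=> h; case: (pselect (Uin u a)) => ha; first by left.
case: (pselect (Uin u b)) => hb; first by right.
exfalso; apply: (uf_notboth h); rewrite complU; apply: uf_meet; exact: uf_compl.
Qed.
End UF.

Lemma clopen_pt (c : A) : clopen (fun w : @Ul d A => Uin w c).
Proof.
have fil x : is_filter (fun y : A => x <= y).
  split; first by rewrite lex1.
  split; first by move=> a b xa ab; exact: le_trans xa ab.
  by move=> ? ? ? ?; rewrite lexI; apply/andP.
split.
  exists (fun y => c <= y); split=> // w; split; first by move=> h a ca; exact: uf_up h ca.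
  by move=> h; apply: h.
exists (fun y => ~` c <= y); split=> // w; split.
  by move=> h a ca; apply: uf_up ca; exact: uf_compl.
by move=> h hc; apply: (uf_notboth hc); apply: h.
Qed.


Section Main.
Variable imp : A -> A -> A.
Hypothesis hA : cond_alg imp.

Lemma imp_top a : imp a \top = \top. Proof. by case: hA. Qed.
Lemma imp_meet a b c : imp a b `&` imp a c = imp a (b `&` c). Proof. by case: hA => _ []. Qed.
Lemma imp_mono a b c : b <= c -> imp a b <= imp a c.
Proof. by move=> bc; rewrite -(meet_l bc) -imp_meet leIr. Qed.
Lemma imp_anti a a' c : a <= a' -> imp a' c <= imp a c.
Proof.
move=> aa; case: hA => _ [_ h]; have := h a a' c; rewrite (join_r aa) lexI.
by case/andP.
Qed.

Lemma filt_up (x : A) : is_filter (fun y : A => x <= y).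
Proof.
split; first by rewrite lex1.
split; first by move=> a b xa ab; exact: le_trans xa ab.
by move=> ? ? ? ?; rewrite lexI; apply/andP.
Qed.

Lemma mclosed_filt F : is_filter F -> mclosed F.
Proof. by case=> [? [? ?]]; split. Qed.

Lemma mclosed_up (x : A) : mclosed (fun y : A => x <= y).
Proof. exact/mclosed_filt/filt_up. Qed.

Lemma mclosed_trace (u : @Ul d A) (B : A -> Prop) : B \top ->
  (forall a b, B a -> B b -> B (a `&` b)) ->
  mclosed (fun c => proj1_sig u c /\ B c).
Proof.
move=> Bt BI; split; first by split=> //; exact: uf_top.
by move=> a b [ua Ba] [ub Bb]; split; [exact: uf_meet|exact: BI].
Qed.

Lemma trace_eq (x y : @Ul d A) (B : A -> Prop) : (forall a, B a -> B (~` a)) ->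
  (forall c, proj1_sig x c /\ B c -> proj1_sig y c) -> EB B x y.
Proof.
move=> BC h b Bb; split; first by move=> xb; exact: h.
move=> yb; apply: contrapT => nxb.
exact: (uf_notboth yb (h _ (conj (uf_compl nxb) (BC _ Bb)))).
Qed.

Lemma part1 B : subalg imp B -> C_equiv imp (EB B).
Proof.
move=> [Bt [Bb [BI [BU [BC Bimp]]]]].
split.
  split.
    split; first by move=> x b _.
    split; first by move=> x y h b Bb'; split => /(h b Bb').
    by move=> x y z h1 h2 b Bb'; split=> [/(h1 b Bb')/(h2 b Bb')|/(h2 b Bb')/(h1 b Bb')].
  move=> x y nE.
  have [b [Bb' nb]] : exists b, B b /\ ~ (proj1_sig x b <-> proj1_sig y b).
    apply: contrapT => hn; apply: nE => b Bb'; apply: contrapT => hh; apply: hn; by exists b.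
  have [xb|nxb] := pselect (proj1_sig x b).
    exists (fun w => proj1_sig w b); split; first exact: clopen_pt.
    split; first by move=> u v ub E; apply/(E b Bb').
    by split=> // yb; apply: nb.
  exists (fun w => proj1_sig w (~` b)); split; first exact: clopen_pt.
  split; first by move=> u v ub E; apply/(E _ (BC _ Bb')).
  split; first exact: uf_compl.
  move=> ync; apply: nb; split=> // yb; exfalso; exact: uf_notboth yb ync.
move=> x y x' Y Exy _ [F [fF [YF Dx]]].
pose G := fun c => exists f, F f /\ B f /\ f <= c.
have fG : is_filter G.
  case: fF => [F1 [Fup FI]].
  split; first by exists \top.
  split; first by move=> a b [f [Ff [Bf fa]]] ab; exists f; split=> //; split=> //; exact: le_trans ab.
  move=> a b [f [Ff [Bf fa]]] [g [Fg [Bg gb]]]; exists (f `&` g); split; first exact: FI.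
  by split; [exact: BI|exact: leI2].
have [y' [Sy' Ty']] : exists y' : @Ul d A, (forall s, Dimp imp y G s -> proj1_sig y' s) /\
    (forall t, proj1_sig x' t /\ B t -> proj1_sig y' t).
  apply: ext2; last first.
  - move=> e c [g [[f [Ff [Bf fg]]] yge]] [x'c Bc] hd.
    have yf : proj1_sig y (imp f (~` c)).
      apply: uf_up yge _; apply: le_trans (imp_anti _ fg) _; exact/imp_mono/disjC.
    have xf : proj1_sig x (imp f (~` c)) by apply/(Exy _ (Bimp _ _ Bf (BC _ Bc))).
    have : proj1_sig x' (~` c) by apply: Dx; exists f.
    exact: uf_notboth x'c.
  - exact: mclosed_trace.
  split.
    exists \top; split; first by exists \top; case: fF => F1 _; split=> //; split.
    by rewrite imp_top; exact: uf_top.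
  move=> e1 e2 [g1 [Gg1 y1]] [g2 [Gg2 y2]]; exists (g1 `&` g2); split.
    by case: fG => _ [_ GI]; exact: GI.
  rewrite -imp_meet; apply: uf_meet.
    by apply: uf_up y1 _; apply: imp_anti; exact: leIl.
  by apply: uf_up y2 _; apply: imp_anti; exact: leIr.
exists y', (phi G); split; first exact: trace_eq.
split; first by exists G.
split; first by exists G.
move=> z zG.
have [w [Fw Tw]] : exists w : @Ul d A, (forall s, F s -> proj1_sig w s) /\
    (forall t, proj1_sig z t /\ B t -> proj1_sig w t).
  apply: ext2; [exact: mclosed_filt| exact: mclosed_trace|].
  move=> f c Ff [zc Bc] hd.
  have : proj1_sig z (~` c).
    apply: zG; exists (~` c); split; last by split=> //; exact: BC.
    by case: fF => _ [Fup _]; apply: Fup Ff _; exact: disjC.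
  exact: uf_notboth zc.
exists w; split; first by apply/YF.
exact: trace_eq.
Qed.


Lemma clopen_pt_inv (U : @Ul d A -> Prop) : clopen U ->
  exists c, forall w, U w <-> proj1_sig w c.
Proof.
move=> [[F1 [f1 U1]] [F2 [f2 U2]]].
have [[a [b [F1a [F2b ab]]]]|none] := pselect (exists a b, F1 a /\ F2 b /\ a `&` b <= \bot).
  exists a => w; split; first by move=> /U1; apply.
  move=> wa; apply: contrapT => nU.
  have := (proj1 (U2 w) nU) b F2b => wb.
  by apply: (uf_notboth wa); apply: (uf_up wb); apply: disjC; rewrite meetC.
exfalso.
have [w [w1 w2]] : exists w : @Ul d A, (forall s, F1 s -> proj1_sig w s) /\
   (forall t, F2 t -> proj1_sig w t).
  apply: ext2; [exact: mclosed_filt|exact: mclosed_filt|].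
  by move=> s t s1 t2 h; apply: none; exists s, t.
by apply: (proj2 (U2 w) w2); apply/U1.
Qed.

Lemma part2 E : C_equiv imp E ->
  exists B : A -> Prop, subalg imp B /\ forall u v, E u v <-> EB B u v.
Proof.
move=> [[[Er [Es Et]] Ebool] Ecc].
pose B := fun a => E_closed E (fun w : @Ul d A => proj1_sig w a).
have Bback a u v : B a -> E u v -> proj1_sig v a -> proj1_sig u a.
  by move=> Ba Euv va; apply: (Ba v u va); apply: Es.
have BC a : B a -> B (~` a).
  move=> Ba x y xa Exy; apply: uf_compl => ya.
  exact: uf_notboth (Bback _ _ _ Ba Exy ya) xa.
exists B; split.
  split; first by move=> x y _ _; exact: uf_top.
  split; first by move=> x y xb; exfalso; exact: uf_bot xb.
  split.
    move=> a b Ba Bb x y /uf_meetE [xa xb] Exy; apply: uf_meet.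
      exact: Ba xa Exy.
    exact: Bb xb Exy.
  split.
    move=> a b Ba Bb x y /uf_join [xa|xb] Exy.
      by apply: uf_up (Ba _ _ xa Exy) _; exact: lexUl.
    by apply: uf_up (Bb _ _ xb Exy) _; exact: lexUr.
  split; first exact: BC.
  move=> a b Ba Bb x y xab Exy; apply: contrapT => nyab.
  have [y' [Sy' Ty']] : exists y' : @Ul d A, (forall s, proj1_sig y (imp a s) -> proj1_sig y' s) /\
      (forall t, ~` b <= t -> proj1_sig y' t).
    apply: ext2; last first.
    - move=> c t yc bt hd; apply: nyab; apply: uf_up yc _; apply: imp_mono.
      rewrite -(complK b); apply: disjC; apply: le_trans hd; apply: leI2 => //.
    - exact: mclosed_up.
    split; first by rewrite imp_top; exact: uf_top.
    by move=> c1 c2 h1 h2; rewrite -imp_meet; exact: uf_meet.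
  have TA1 : TA imp y (phi (fun c => a <= c)) y'.
    exists (fun c => a <= c); split; first exact: filt_up.
    split=> // c [a' [aa' ya'c]]; apply: Sy'; apply: uf_up ya'c _; exact: imp_anti.
  have [y'' [C [Ey' [_ [[G [fG [CG DG]]] prec]]]]] :=
    Ecc y x y' _ (Es _ _ Exy) (ex_intro _ _ (conj (filt_up a) (fun w => iff_refl _))) TA1.
  have Ga : G a.
    apply: contrapT => nGa.
    have [z [zG za]] : exists z : @Ul d A, (forall s, G s -> proj1_sig z s) /\
       (forall t, ~` a <= t -> proj1_sig z t).
      apply: ext2; [exact: mclosed_filt|exact: mclosed_up|].
      move=> g t Gg at' hd; apply: nGa; case: fG => _ [Gup _]; apply: Gup Gg _.
      rewrite -(complK a); apply: disjC; apply: le_trans hd; apply: leI2 => //.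
    have [w [wY Ezw]] := prec z (proj2 (CG z) zG).
    have wa : proj1_sig w a by apply: wY.
    exact: uf_notboth (Bback _ _ _ Ba Ezw wa) (za _ (lexx _)).
  have y''b : proj1_sig y'' b by apply: DG; exists a.
  exact: uf_notboth (Bback _ _ _ Bb Ey' y''b) (Ty' _ (lexx _)).
move=> u v; split.
  move=> Euv b Bb; split; first by move=> ub; exact: Bb ub Euv.
  exact: Bback.
move=> Huv; apply: contrapT => nE.
have [U [cU [EU [Uu nUv]]]] := Ebool u v nE.
have [c hc] := clopen_pt_inv cU.
have Bc : B c by move=> x y xc Exy; apply/hc; apply: EU (Exy); apply/hc.
by apply: nUv; apply/hc; apply/(Huv c Bc); apply/hc.
Qed.

Lemma part3 B B' : subalg imp B -> subalg imp B' ->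
  ((forall a, B a -> B' a) <-> (forall u v, EB B' u v -> EB B u v)).
Proof.
move=> _ [B't [B'b [B'I [B'U [B'C _]]]]]; split.
  by move=> h u v E b Bb; exact: E _ (h _ Bb).
move=> H a Ba; apply: contrapT => nB'a.
have [x [xS xa]] : exists x : @Ul d A,
   (forall s, (exists b, B' b /\ b <= a /\ ~` b <= s) -> proj1_sig x s) /\
   (forall t, a <= t -> proj1_sig x t).
  apply: ext2; last first.
  - move=> s t [b [B'b' [ba bs]]] at' hd; apply: nB'a.
    have ab : a <= b.
      rewrite -(complK b); apply: disjC; rewrite meetC; apply: le_trans hd; exact: leI2.
    by rewrite (le_anti (andb_true_intro (conj ab ba))).
  - exact: mclosed_up.
  split; first by exists \bot; split=> //; rewrite le0x lex1.
  move=> s1 s2 [b1 [B1 [b1a b1s]]] [b2 [B2 [b2a b2s]]].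
  exists (b1 `|` b2); split; first exact: B'U.
  split; first by rewrite leUx b1a b2a.
  by rewrite complU; exact: leI2.
have [y [yS ya]] : exists y : @Ul d A, (forall s, proj1_sig x s /\ B' s -> proj1_sig y s) /\
   (forall t, ~` a <= t -> proj1_sig y t).
  apply: ext2; [exact: mclosed_trace|exact: mclosed_up|].
  move=> c t [xc B'c] at' hd.
  have ca : c <= a by rewrite -(complK a); apply: disjC; apply: le_trans hd; exact: leI2.
  exact: uf_notboth xc (xS _ (ex_intro _ c (conj B'c (conj ca (lexx _))))).
have E' : EB B' x y by apply: trace_eq.
have := (H x y E' a Ba); case=> /(_ (xa _ (lexx _))) ya' _.
exact: uf_notboth ya' (ya _ (lexx _)).
Qed.

End Main.
End Infra.

Theorem theorem7p6 (d : Order.disp_t) (A : ctbDistrLatticeType d)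
  (imp : A -> A -> A) (hA : cond_alg imp) :
  (* B |-> E_B maps subalgebras to C-equivalences *)
  (forall B : A -> Prop, subalg imp B -> C_equiv imp (EB B)) /\
  (* surjective onto C-equivalences *)
  (forall E : Ul -> Ul -> Prop, C_equiv imp E ->
     exists B : A -> Prop, subalg imp B /\ forall u v, E u v <-> EB B u v) /\
  (* order-reversing and order-reflecting (hence injective): dual isomorphism *)
  (forall B B' : A -> Prop, subalg imp B -> subalg imp B' ->
     ((forall a, B a -> B' a) <-> (forall u v, EB B' u v -> EB B u v))).
Proof.
split; first exact: part1.
split; first exact: part2.
exact: part3.
Qed.
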